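(* In the fixed-volume $\alpha$-cap process described in the context (with $|A_0|=\alpha$), there is $R>0$ such that $A_1\subseteq B(0,R)$.
   Context: $B(0,R)$ is the open Euclidean ball, $|\cdot|$ Lebesgue measure. Kernel assumptions: $g:\mathbb{R}^d\to[0,1]$, $g(x)=\tilde g(\|x\|)$; $g(0)=1$, $g>0$; $g$ is $L$-Lipschitz with continuous first and second derivatives; $\tilde g'(r)<0$ for $r>0$. Fixed-volume $\alpha$-cap process: $A_0\subset\mathbb{R}^d$ compact with $|A_0|=\alpha>0$; for $t\ge1$, $f_t(x)=\int\mathbbm{1}_{A_{t-1}}(y)g(x-y)\,dy$, $C_t=\inf\{C\ge0:|\{x:f_t(x)\ge C\}|<\alpha\}$, $A_t=\{x:f_t(x)\ge C_t\}$. *)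

(* Defs.v *)
From HB Require Import structures.
From mathcomp Require Import all_boot all_order all_algebra.
From mathcomp Require Import all_classical all_reals all_analysis.
Set Implicit Arguments. Unset Strict Implicit. Unset Printing Implicit Defensive.
Import Order.TTheory GRing.Theory Num.Theory.
Import numFieldNormedType.Exports.
Local Open Scope classical_set_scope.
Local Open Scope ring_scope.

Definition eucl_norm (R : realType) (d : nat) (x : 'rV[R]_d) : R :=
  Num.sqrt (\sum_(i < d) x ord0 i ^+ 2).

Definition eball0 (R : realType) (d : nat) (r : R) : set 'rV[R]_d :=
  [set x | eucl_norm x < r].

Definition box (R : realType) (d : nat) (a b : 'rV[R]_d) : set 'rV[R]_d :=
  [set x | forall i : 'I_d, a ord0 i <= x ord0 i < b ord0 i].

Definition boxes (R : realType) (d : nat) : set (set 'rV[R]_d) :=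
  [set B | exists a b, B = box a b].

(* R^d with its Borel sigma-algebra (generated by half-open boxes) *)
Definition Rd (R : realType) (d : nat) := g_sigma_algebraType (@boxes R d).

(* A measure on the Borel sets of R^d is Lebesgue measure iff it gives every
   box its volume (uniqueness of the extension from the semiring of boxes). *)
Definition is_lebesgue (R : realType) (d : nat)
    (mu : {measure set (Rd R d) -> \bar R}) : Prop :=
  forall a b : 'rV[R]_d, (forall i, a ord0 i <= b ord0 i) ->
    mu (box a b) = (\prod_(i < d) (b ord0 i - a ord0 i))%:E.

Definition evec {R : realType} {d : nat} (i : 'I_d) : 'rV[R]_d :=
  delta_mx ord0 i.

Definition kernel_assumptions (R : realType) (d : nat)
    (g : 'rV[R]_d -> R) : Prop :=
  (forall x, 0 <= g x <= 1) /\
  (exists gt : R -> R,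
      (forall x, g x = gt (eucl_norm x)) /\
      (forall r, 0 < r -> derivable gt r 1 /\ derive1 gt r < 0)) /\
  g 0 = 1 /\
  (forall x, 0 < g x) /\
  (exists L : R, 0 <= L /\
     forall x y, `|g x - g y| <= L * eucl_norm (x - y)) /\
  (forall (i : 'I_d) x, derivable g x (evec i)) /\
  (forall i : 'I_d, continuous (fun x => derive g x (evec i))) /\
  (forall (i j : 'I_d) x, derivable (fun y => derive g y (evec i)) x (evec j)) /\
  (forall i j : 'I_d, continuous
     (fun x => derive (fun y => derive g y (evec i)) x (evec j))).

Section CapStep.
Context (R : realType) (d : nat) (mu : {measure set (Rd R d) -> \bar R})
        (g : 'rV[R]_d -> R) (alpha : R).

Definition cap_f (A : set 'rV[R]_d) (x : 'rV[R]_d) : \bar R :=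
  (\int[mu]_(y in [set: Rd R d]) ((\1_A y) * g (x - (y : 'rV[R]_d)))%:E)%E.

Definition cap_C (A : set 'rV[R]_d) : R :=
  inf [set C : R | 0 <= C /\
        (mu [set x : Rd R d | (C%:E <= cap_f A x)%E] < alpha%:E)%E].

Definition cap_next (A : set 'rV[R]_d) : set 'rV[R]_d :=
  [set x | ((cap_C A)%:E <= cap_f A x)%E].

End CapStep.

(* Main.v *)
Require Import Defs.
From HB Require Import structures.
From mathcomp Require Import all_boot all_order all_algebra.
From mathcomp Require Import all_classical all_reals all_analysis.
From mathcomp Require Import measurable_realfun.
From mathcomp Require Import ring lra.
Import Order.TTheory GRing.Theory Num.Theory.
Import numFieldNormedType.Exports.
Local Open Scope classical_set_scope.
Local Open Scope ring_scope.
Set Implicit Arguments. Unset Strict Implicit.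

Section E.
Variables (R : realType) (d : nat).

Lemma eucl_coord (x : 'rV[R]_d) i : `|x ord0 i| <= eucl_norm x.
Proof.
rewrite /eucl_norm -sqrtr_sqr ler_sqrt ?sumr_ge0 // => [|j _]; last exact: sqr_ge0.
rewrite (bigD1 i) //= lerDl sumr_ge0 // => j _; exact: sqr_ge0.
Qed.

Lemma eucl_le (x : 'rV[R]_d) (M : R) : 0 <= M -> (forall i, `|x ord0 i| <= M) ->
  eucl_norm x <= d%:R * M.
Proof.
move=> M0 H; rewrite /eucl_norm -(@ger0_norm _ (d%:R * M)) ?mulr_ge0 //.
rewrite -sqrtr_sqr ler_sqrt ?sqr_ge0 //.
apply: (@le_trans _ _ (\sum_(i < d) M ^+ 2)).
  apply: ler_sum => i _; rewrite -real_normK ?num_real //.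
  by rewrite lerXn2r ?nnegrE ?normr_ge0.
rewrite sumr_const card_ord exprMn -[M ^+ 2 *+ d]mulr_natl ler_wpM2r ?sqr_ge0 //.
by rewrite -natrX ler_nat; case: (d) => // n; rewrite expnS leq_pmulr.
Qed.

Lemma eucl0 (x : 'rV[R]_0) : eucl_norm x = 0.
Proof. by rewrite /eucl_norm big_ord0 sqrtr0. Qed.
End E.

Section M.
Variables (R : realType) (d : nat).

Lemma open_meas (U : set (Rd R d)) :
  (forall x : 'rV[R]_d, U x -> exists2 e : R, 0 < e &
      forall y : 'rV[R]_d, (forall i, `|y ord0 i - x ord0 i| < e) -> U y) ->
  measurable U.
Proof.
move=> HU.
pose rv (a : 'rV[rat]_d) : 'rV[R]_d := \row_i ratr (a ord0 i).
pose F (ab : 'rV[rat]_d * 'rV[rat]_d) : set (Rd R d) :=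
  if pselect (box (rv ab.1) (rv ab.2) `<=` U) then box (rv ab.1) (rv ab.2)
  else set0.
have -> : U = \bigcup_ab F ab.
  apply/seteqP; split; last first.
    by move=> x [ab _]; rewrite /F; case: pselect => // H; exact: H.
  move=> x Ux; have [e e0 He] := HU x Ux.
  have : forall i : 'I_d, exists ab : rat * rat,
      x ord0 i - e < ratr ab.1 < x ord0 i /\ x ord0 i < ratr ab.2 < x ord0 i + e.
    move=> i.
    have l1 : x ord0 i - e < x ord0 i by rewrite ltrBlDr ltrDl.
    have l2 : x ord0 i < x ord0 i + e by rewrite ltrDl.
    have [q1 Hq1] := @rat_in_itvoo R _ _ l1.
    have [q2 Hq2] := @rat_in_itvoo R _ _ l2.
    exists (q1, q2); rewrite !in_itv /= in Hq1 Hq2; by rewrite Hq1 Hq2.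
  move=> /choice [f Hf].
  exists (\row_i (f i).1, \row_i (f i).2) => //.
  have Hbox : box (rv (\row_i (f i).1)) (rv (\row_i (f i).2)) x.
    move=> i; rewrite !mxE; have := Hf i => -[/andP[_ h1] /andP[h2 _]].
    by rewrite (ltW h1) h2.
  rewrite /F; case: pselect => //= H; exfalso; apply: H => y Hy.
  apply: He => i; have := Hy i; rewrite !mxE => /andP[h1 h2].
  have := Hf i => -[/andP[h3 h4] /andP[h5 h6]].
  rewrite ltr_norml; apply/andP; split; lra.
have mF : forall ab, measurable (F ab).
  move=> ab.
  rewrite /F; case: (pselect (box (rv ab.1) (rv ab.2) `<=` U)) => H.
    by apply: sub_sigma_algebra; exists (rv ab.1), (rv ab.2).
  exact: measurable0.
exact: (countable_bigcupT_measurable (countableP _) mF).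
Qed.


Lemma closed_meas (V : set (Rd R d)) :
  (forall x : 'rV[R]_d, ~ V x -> exists2 e : R, 0 < e &
      forall y : 'rV[R]_d, (forall i, `|y ord0 i - x ord0 i| < e) -> ~ V y) ->
  measurable V.
Proof.
move=> HV; rewrite -(setCK V); apply: measurableC; apply: open_meas.
exact: HV.
Qed.

Lemma compact_meas (A : set 'rV[R]_d) : compact A -> @measurable _ (Rd R d) A.
Proof.
move=> cA; have cl := compact_closed (@norm_hausdorff _ _) cA.
apply: closed_meas => x nAx.
have : open (~` A) := closed_openC cl.
rewrite openE => /(_ x nAx) /nbhs_ballP [e e0 He].
exists e => // y Hy; apply: He; split => // i j; rewrite [i]ord1.
by rewrite /ball /= distrC; exact: Hy.
Qed.

Lemma compact_coord_bound (A : set 'rV[R]_d) : compact A ->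
  exists2 r : R, 0 < r & forall y, A y -> forall i, `|y ord0 i| <= r.
Proof.
move=> /compact_bounded [M [_ HM]].
have HM1 : globally A [set x0 | `|x0| <= `|M| + 1].
  by apply: HM; apply: (le_lt_trans (ler_norm M)); rewrite ltrDl.
exists (`|M| + 2); first by rewrite ltr_wpDl.
move=> y Ay i.
have hb : ball (0 : 'rV[R]_d) (`|M| + 2) y.
  rewrite mx_norm_ball /ball_ /= sub0r normrN.
  by apply: (le_lt_trans (HM1 _ Ay)); rewrite ltrD2l ltr1n.
have := hb.2 ord0 i; rewrite /ball /= mxE sub0r normrN => h; exact: ltW.
Qed.

End M.

Lemma gt_decr (R : realType) (gt : R -> R) :
  (forall r, 0 < r -> derivable gt r 1 /\ derive1 gt r < 0) ->
  forall a b, 0 < a -> a < b -> gt b < gt a.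
Proof.
move=> H a b a0 ab.
have pos x : x \in `[a, b] -> 0 < x.
  by rewrite in_itv /= => /andP[h _]; exact: (lt_le_trans a0 h).
have poso x : x \in `]a, b[ -> 0 < x.
  by rewrite in_itv /= => /andP[h _]; exact: (lt_trans a0 h).
apply: (@ltr0_derive1_decr R gt a b) => //.
- by move=> x /poso /H [].
- by move=> x /poso /H [].
- by apply: derivable_within_continuous => x /pos /H [].
Qed.

Section I.
Variables (R : realType) (d : nat) (mu : {measure set (Rd R d) -> \bar R})
  (g : 'rV[R]_d -> R) (alpha : R) (A0 : set 'rV[R]_d) (L : R).
Hypothesis mA0 : @measurable _ (Rd R d) A0.
Hypothesis muA0 : mu A0 = alpha%:E.
Hypothesis g01 : forall x, 0 <= g x <= 1.
Hypothesis L0 : 0 <= L.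
Hypothesis HL : forall x y, `|g x - g y| <= L * eucl_norm (x - y).

Lemma mg x : measurable_fun [set: Rd R d] (fun y : Rd R d => g (x - y)).
Proof.
apply: (measurability _ (RGenOInfty.measurableE R)).
move=> _ [_ [c ->] <-]; rewrite setTI.
apply: open_meas => y /=; rewrite in_itv /= andbT => cy.
pose e := (g (x - y) - c) / (L * d%:R + 1).
have dp : 0 < L * d%:R + 1 by rewrite ltr_pwDr // mulr_ge0.
have e0 : 0 < e by rewrite divr_gt0 // subr_gt0.
exists e => // z Hz; rewrite in_itv /= andbT.
have h1 : eucl_norm ((x - z) - (x - y)) <= d%:R * e.
  apply: eucl_le; first exact: ltW.
  move=> i; rewrite !mxE; apply: ltW; rewrite -normrN.
  have -> : - (x ord0 i - z ord0 i - (x ord0 i - y ord0 i)) = z ord0 i - y ord0 i by ring.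
  exact: Hz.
have h2 := HL (x - z) (x - y).
have h3 : L * (d%:R * e) < g (x - y) - c.
  rewrite mulrA /e mulrA ltr_pdivrMr //.
  move: cy; nra.
have h4 : L * eucl_norm (x - z - (x - y)) <= L * (d%:R * e) by rewrite ler_wpM2l.
move: h2; rewrite ler_norml => /andP[h5 _]; lra.
Qed.

Let h x := fun y : Rd R d => ((\1_A0 y) * g (x - y))%:E.

Lemma mh x : measurable_fun [set: Rd R d] (fun y : Rd R d => ((\1_A0 y) * g (x - y))%:E).
Proof.
apply/measurable_EFinP; apply: measurable_funM; last exact: mg.
exact: measurable_indic.
Qed.

Lemma h_ge0 x y : (0 <= h x y)%E.
Proof.
rewrite /h lee_fin; apply: mulr_ge0 => //; by case/andP: (g01 (x - y)).
Qed.

Lemma int_indic_c c : 0 <= c ->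
  (\int[mu]_(y in [set: Rd R d]) ((\1_A0 y) * c)%:E = (c * alpha)%:E)%E.
Proof.
move=> c0.
have -> : (fun y : Rd R d => ((\1_A0 y) * c)%:E) =
          (fun y => c%:E * (\1_A0 y)%:E)%E.
  by apply: funext => y; rewrite mulrC EFinM.
rewrite ge0_integralZl_EFin //.
- by rewrite integral_indic // setIT muA0 -EFinM.
- by apply/measurable_EFinP; exact: measurable_indic.
Qed.

Lemma f_ge0 x : (0 <= cap_f mu g A0 x)%E.
Proof. by apply: integral_ge0 => y _; exact: h_ge0. Qed.

Lemma mic (c : R) : measurable_fun [set: Rd R d] (fun y : Rd R d => ((\1_A0 y) * c)%:E).
Proof.
apply/measurable_EFinP; apply: measurable_funM; last exact: measurable_cst.
exact: measurable_indic.
Qed.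

Lemma ic_ge0 (c : R) : 0 <= c -> forall y : Rd R d, [set: Rd R d] y -> (0 <= ((\1_A0 y) * c)%:E)%E.
Proof. by move=> c0 y _; rewrite lee_fin mulr_ge0 // /indic ler0n. Qed.

Lemma h_ge0' x : forall y : Rd R d, [set: Rd R d] y -> (0 <= h x y)%E.
Proof. by move=> y _; exact: h_ge0. Qed.

Lemma f_lower x c : 0 <= c -> (forall y, A0 y -> c <= g (x - y)) ->
  ((c * alpha)%:E <= cap_f mu g A0 x)%E.
Proof.
move=> c0 Hc; rewrite -int_indic_c //.
apply: (ge0_le_integral mu measurableT (ic_ge0 c0) (mic c) (mh x)).
move=> y _; rewrite lee_fin /indic; case: (boolP (y \in A0)) => yA.
  by rewrite !mul1r; apply: Hc; rewrite -inE.
by rewrite !mul0r.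
Qed.

Lemma f_upper x c : 0 <= c -> (forall y, A0 y -> g (x - y) <= c) ->
  (cap_f mu g A0 x <= (c * alpha)%:E)%E.
Proof.
move=> c0 Hc; rewrite -int_indic_c //.
apply: (ge0_le_integral mu measurableT (h_ge0' x) (mh x) (mic c)).
move=> y _; rewrite lee_fin /indic; case: (boolP (y \in A0)) => yA.
  by rewrite !mul1r; apply: Hc; rewrite -inE.
by rewrite !mul0r.
Qed.

Lemma f_lip x x' :
  (cap_f mu g A0 x <= cap_f mu g A0 x' + (L * eucl_norm (x - x') * alpha)%:E)%E.
Proof.
have c0 : 0 <= L * eucl_norm (x - x').
  by rewrite mulr_ge0 // /eucl_norm sqrtr_ge0.
rewrite -int_indic_c // -(ge0_integralD mu measurableT (h_ge0' x') (mh x') (ic_ge0 c0) (mic _)).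
apply: (ge0_le_integral mu measurableT (h_ge0' x) (mh x)).
  by apply: emeasurable_funD; [exact: mh | exact: mic].
move=> y _; rewrite /h -EFinD lee_fin /indic; case: (boolP (y \in A0)) => yA.
  rewrite !mul1r.
  have := HL (x - y) (x' - y).
  have -> : x - y - (x' - y) = x - x' by rewrite opprB addrA subrK.
  rewrite ler_norml => /andP[_ hh]; lra.
by rewrite !mul0r addr0.
Qed.

Lemma f_fin x : cap_f mu g A0 x = (fine (cap_f mu g A0 x))%:E.
Proof.
have h0 := f_ge0 x.
have h1 : (cap_f mu g A0 x <= (1 * alpha)%:E)%E.
  by apply: f_upper => // y _; case/andP: (g01 (x - y)).
by rewrite fineK // ge0_fin_numE // (le_lt_trans h1) // ltry.
Qed.

Lemma level_meas (C : R) : 0 <= alpha ->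
  @measurable _ (Rd R d) [set x : Rd R d | (C%:E <= cap_f mu g A0 x)%E].
Proof.
move=> a0; apply: closed_meas => x /= /negP; rewrite -ltNge (f_fin x) lte_fin => lt.
set v := fine (cap_f mu g A0 x) in lt *.
pose e := (C - v) / (L * d%:R * alpha + 1).
have dp : 0 < L * d%:R * alpha + 1 by rewrite ltr_pwDr // !mulr_ge0.
have e0 : 0 < e by rewrite divr_gt0 // subr_gt0.
exists e => // y Hy /=; apply/negP; rewrite -ltNge.
apply: (le_lt_trans (f_lip y x)); rewrite (f_fin x) -/v -EFinD lte_fin.
have h1 : eucl_norm (y - x) <= d%:R * e.
  apply: eucl_le; first exact: ltW.
  by move=> i; rewrite !mxE; apply: ltW; exact: Hy.
have h2 : L * eucl_norm (y - x) * alpha <= L * (d%:R * e) * alpha.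
  by rewrite ler_wpM2r // ler_wpM2l.
have h3 : L * (d%:R * e) * alpha < C - v.
  have -> : L * (d%:R * e) * alpha = (L * d%:R * alpha) * e by ring.
  rewrite /e mulrA ltr_pdivrMr //.
  move: lt; nra.
lra.
Qed.

End I.

Section G.
Variables (R : realType) (d : nat) (g : 'rV[R]_d -> R) (gt : R -> R).
Hypothesis dpos : (0 < d)%N.
Hypothesis g01 : forall x, 0 <= g x <= 1.
Hypothesis ggt : forall x, g x = gt (eucl_norm x).
Hypothesis gder : forall r, 0 < r -> derivable gt r 1 /\ derive1 gt r < 0.
Hypothesis g0 : g 0 = 1.

Lemma eucl_val t : 0 <= t -> exists v : 'rV[R]_d, eucl_norm v = t.
Proof.
move=> t0; pose i0 : 'I_d := Ordinal dpos.
exists (\row_j (if j == i0 then t else 0)).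
rewrite /eucl_norm (bigD1 i0) //= big1 => [|j /negbTE hj]; last by rewrite mxE hj expr0n.
by rewrite mxE eqxx addr0 sqrtr_sqr ger0_norm.
Qed.

Lemma gt_01 t : 0 <= t -> 0 <= gt t <= 1.
Proof. by move=> /eucl_val [v <-]; rewrite -ggt. Qed.

Lemma gt0_1 : gt 0 = 1.
Proof.
rewrite -g0 ggt /eucl_norm big1 ?sqrtr0 // => i _; by rewrite mxE expr0n.
Qed.

Lemma gt_mono a b : 0 <= a -> a <= b -> gt b <= gt a.
Proof.
move=> a0 ab; have [->|ap] := eqVneq a 0.
  by rewrite gt0_1; case/andP: (gt_01 (le_trans a0 ab)).
have ap' : 0 < a by rewrite lt_def ap a0.
have [->|abn] := eqVneq a b; first by [].
apply: ltW; apply: gt_decr => //; by rewrite lt_def eq_sym abn ab.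
Qed.

End G.

Unset Implicit Arguments. Set Strict Implicit.
Theorem lemma7 (R : realType) (d : nat)
    (mu : {measure set (Rd R d) -> \bar R}) (g : 'rV[R]_d -> R)
    (alpha : R) (A0 : set 'rV[R]_d) :
  is_lebesgue mu ->
  kernel_assumptions g ->
  0 < alpha ->
  compact A0 ->
  mu A0 = alpha%:E ->
  exists Rad : R, 0 < Rad /\ cap_next mu g alpha A0 `<=` eball0 Rad.
Proof.
move=> leb [g01 [[gt [ggt gder]] [g0 [gpos [[L [L0 HL]] _]]]]] a0 cA0 muA0.
have [d0|dpos] := posnP d.
  subst d; exists 1; split => // x _.
  by rewrite /eball0 /= /eucl_norm big_ord0 sqrtr0 ltr01.
have [r0 r0p Hr0] := compact_coord_bound cA0.
have mA0 : @measurable _ (Rd R d) A0 by exact: compact_meas.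
have gmono := gt_mono dpos g01 ggt gder g0.
have g01' := gt_01 dpos g01 ggt.
pose s := alpha + 1.
pose rho := d%:R * (s + r0).
have dR : 0 < d%:R :> R by rewrite ltr0n.
have rhop : 0 < rho by rewrite mulr_gt0 // /s; lra.
pose c0 := gt rho * alpha.
have [grho0 grho1] := andP (g01' rho (ltW rhop)).
pose Q : set 'rV[R]_d := box 0 (const_mx s).
have flow x : Q x -> (c0%:E <= cap_f mu g A0 x)%E.
  move=> Qx; apply: (f_lower mA0 muA0 L0 HL) => // y Ay.
  rewrite ggt; apply: gmono; first by rewrite /eucl_norm sqrtr_ge0.
  apply: eucl_le; first by rewrite /s; lra.
  move=> i; rewrite !mxE; have := Qx i; rewrite !mxE => /andP[h1 h2].
  have := Hr0 y Ay i; rewrite ler_norml => /andP[h3 h4].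
  rewrite ler_norml; apply/andP; split; lra.
have muQ : (alpha%:E < mu Q)%E.
  rewrite /Q leb; last by move=> i; rewrite !mxE /s; lra.
  under eq_bigr do rewrite !mxE subr0.
  rewrite prodr_const card_ord lte_fin.
  by apply: (lt_le_trans (_ : alpha < s)); [rewrite /s; lra | apply: ler_eXnr => //; rewrite /s; lra].
have mQ : @measurable _ (Rd R d) Q.
  by apply: sub_sigma_algebra; exists 0, (const_mx s).
have Cge : c0 <= cap_C mu g alpha A0.
  apply: lb_le_inf.
    exists (alpha + 1); split; first lra.
    have -> : [set x : Rd R d | ((alpha + 1)%:E <= cap_f mu g A0 x)%E] = set0.
      apply/seteqP; split => // x /=; apply/negP; rewrite -ltNge.
      have hb : forall y, A0 y -> g (x - y) <= 1.
        by move=> y _; case/andP: (g01 (x - y)).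
      apply: (le_lt_trans (f_upper mA0 muA0 g01 L0 HL ler01 hb)).
      by rewrite lte_fin mul1r; lra.
    by rewrite measure0 lte_fin.
  move=> C [C0 HC]; rewrite leNgt; apply/negP => Cc.
  have sub : Q `<=` [set x : Rd R d | (C%:E <= cap_f mu g A0 x)%E].
    move=> x Qx /=; apply: le_trans (flow x Qx); rewrite lee_fin; exact: ltW.
  have := le_measure mu (mem_set mQ) (mem_set (level_meas mA0 muA0 g01 L0 HL C (ltW a0))) sub.
  move=> hle; have := lt_le_trans muQ hle; rewrite ltNge => /negP; apply.
  exact: ltW.
pose M := rho + 1 + r0.
exists (d%:R * M + 1); split; first by rewrite ltr_pwDr // mulr_ge0 //; rewrite /M; lra.
move=> x A1x; rewrite /eball0 /=; rewrite ltNge; apply/negP => big.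
have [i Hi] : exists i, M < `|x ord0 i|.
  apply: contrapT => nex.
  have : eucl_norm x <= d%:R * M.
    apply: eucl_le; first by rewrite /M; lra.
    by move=> i; rewrite leNgt; apply/negP => hi; apply: nex; exists i.
  lra.
have fup : (cap_f mu g A0 x <= (gt (rho + 1) * alpha)%:E)%E.
  apply: (f_upper mA0 muA0 g01 L0 HL).
    by have [] := andP (g01' (rho + 1) (ltW (ltr_wpDr ler01 rhop))).
  move=> y Ay; rewrite ggt; apply: gmono; first lra.
  apply: le_trans (eucl_coord _ i); rewrite !mxE.
  have h2 := Hr0 y Ay i.
  have h3 := ler_normD (x ord0 i - y ord0 i) (y ord0 i); rewrite subrK in h3.
  move: Hi; rewrite /M => h1; lra.
have glt : gt (rho + 1) < gt rho by apply: gt_decr => //; lra.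
move: A1x; rewrite /cap_next /= => A1x.
have hc : (c0%:E <= (cap_C mu g alpha A0)%:E)%E by rewrite lee_fin.
have := le_trans (le_trans hc A1x) fup; rewrite lee_fin /c0 => hh.
have : gt (rho + 1) * alpha < gt rho * alpha by rewrite ltr_pM2r.
lra.
Qed.
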